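(* Let $O_1,\dots,O_m\subset\mathbb{R}^2$ be nonempty, closed, convex obstacles with $\eta:=\min_{i\neq l} d(O_i,O_l)$ satisfying $\eta>2(r+\rho_{\max})$, and let $0<\epsilon<\tfrac12\left[\eta-2(r+\rho_{\max})\right]$. Let $x\in\mathbb{R}^2$ satisfy $0<\delta(x)<\epsilon$, and let $j$ be the (unique) index of the obstacle nearest to $x$. Then: (i) $x$ lies in the interior of the wall following local free space $\mathcal{LF}_w(x)=\mathcal{LF}(x)\cap\mathcal{D}_w(x)$; (ii) $\mathcal{LF}_w(x)=\mathcal{D}_w(x)\cap H_j(x)$, where $H_j(x)=\{q\in\mathbb{R}^2:\ (q-x_h(x))\cdot n_w(x)\ge 0\}$ with $x_h(x)=x-\tfrac12\delta(x)\,n_w(x)$; (iii) the point $x_p(x)$ lies on the boundary of $\mathcal{LF}_w(x)$.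
   Context: Setting: a disk-shaped robot of radius $r>0$ centered at $x\in\mathbb{R}^2$; $\rho_{\max}>0$ is the largest radius among the movable disk-shaped objects. $d(A,B)=\inf\{\|a-b\|: a\in A, b\in B\}$, $d(x,A)=d(\{x\},A)$, and $\Pi_A(x)$ is the (unique) nearest point of a closed convex set $A$ to $x$. Define $\delta(x):=\min_i d(x,O_i)-r$ (this equals the distance $d(x,\partial\mathcal F)$ from $x$ to the boundary of the free space $\mathcal F=\{x: d(x,O_i)\ge r\ \forall i\}$ when $x\in\mathcal F$; it is also the LIDAR quantity $\min_\theta\rho_x(\theta)-r$ when the sensing range is large enough). For $x\notin O_i$ let $n_i(x):=(x-\Pi_{O_i}(x))/\|x-\Pi_{O_i}(x)\|$ and $d_i:=d(x,O_i)$, and define the half-plane $H_i(x):=\{q:\ (q-x+\tfrac12(d_i-r)n_i(x))\cdot n_i(x)\ge 0\}$ (the max-margin separating half-plane between the robot disk and $O_i$, eroded by $r$). The local free space is $\mathcal{LF}(x):=\bigcap_{i=1}^m H_i(x)$ (a convex set). When the nearest obstacle $O_j$ to $x$ is unique, set $n_w(x):=n_j(x)$, $t_w(x):=J n_w(x)$ with $J=\begin{bmatrix}0&-1\\1&0\end{bmatrix}$, $x_{\mathrm{offset}}(x):=x-\delta(x)\,n_w(x)$, the offset disk $\mathcal D_w(x):=\{p:\|p-x_{\mathrm{offset}}(x)\|\le\epsilon\}$, the wall following local free space $\mathcal{LF}_w(x):=\mathcal{LF}(x)\cap\mathcal D_w(x)$, and, for a fixed direction parameter $a\in\{-1,1\}$,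 the wall following goal $x_p(x):=x_{\mathrm{offset}}(x)+\tfrac{\epsilon}{2}n_w(x)+a\tfrac{\epsilon\sqrt3}{2}t_w(x)$. *)

(* Defs.v *)
From Stdlib Require Import Reals Lra List Classical ClassicalEpsilon.
Open Scope R_scope.

Definition pt := (R * R)%type.
Definition vadd (p q : pt) : pt := (fst p + fst q, snd p + snd q).
Definition vsub (p q : pt) : pt := (fst p - fst q, snd p - snd q).
Definition vscale (c : R) (p : pt) : pt := (c * fst p, c * snd p).
Definition dot (p q : pt) : R := fst p * fst q + snd p * snd q.
Definition norm (p : pt) : R := sqrt (dot p p).
Definition Jrot (p : pt) : pt := (- snd p, fst p).

(* Infimum of a set of reals (0 by convention if it has no infimum). *)
Definition is_inf (E : R -> Prop) (l : R) : Prop :=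
  (forall y, E y -> l <= y) /\ (forall b, (forall y, E y -> b <= y) -> b <= l).
Definition Inf (E : R -> Prop) : R :=
  match excluded_middle_informative (exists l, is_inf E l) with
  | left h => proj1_sig (constructive_indefinite_description _ h)
  | right _ => 0
  end.

Definition dist_pt (x : pt) (A : pt -> Prop) : R :=
  Inf (fun t => exists a, A a /\ t = norm (vsub x a)).
Definition dist_set (A B : pt -> Prop) : R :=
  Inf (fun t => exists a b, A a /\ B b /\ t = norm (vsub a b)).

Definition proj (A : pt -> Prop) (x : pt) : pt :=
  epsilon (inhabits (0, 0)) (fun p => A p /\ norm (vsub x p) = dist_pt x A).

Definition is_closed (A : pt -> Prop) : Prop :=
  forall p, ~ A p -> exists e, 0 < e /\ forall q, norm (vsub q p) < e -> ~ A q.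
Definition is_convex (A : pt -> Prop) : Prop :=
  forall a b t, A a -> A b -> 0 <= t <= 1 -> A (vadd a (vscale t (vsub b a))).
Definition nonempty (A : pt -> Prop) : Prop := exists a, A a.

Definition interior2 (S : pt -> Prop) (x : pt) : Prop :=
  exists e, 0 < e /\ forall q, norm (vsub q x) < e -> S q.
Definition boundary2 (S : pt -> Prop) (x : pt) : Prop :=
  (forall e, 0 < e -> exists q, norm (vsub q x) < e /\ S q) /\
  (forall e, 0 < e -> exists q, norm (vsub q x) < e /\ ~ S q).

Section Robot.
(* obstacles O 0, ..., O (m-1) ; robot radius r *)
Variables (m : nat) (O : nat -> pt -> Prop) (r : R).

Definition min_obs_dist (x : pt) : R :=
  fold_right Rmin (dist_pt x (O 0)) (map (fun i => dist_pt x (O i)) (seq 0 m)).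
Definition delta (x : pt) : R := min_obs_dist x - r.

Definition nvec (i : nat) (x : pt) : pt :=
  vscale (/ norm (vsub x (proj (O i) x))) (vsub x (proj (O i) x)).
Definition Hhalf (i : nat) (x : pt) (q : pt) : Prop :=
  dot (vadd (vsub q x) (vscale (/2 * (dist_pt x (O i) - r)) (nvec i x))) (nvec i x) >= 0.
Definition LF (x : pt) (q : pt) : Prop := forall i, (i < m)%nat -> Hhalf i x q.

(* wall-following quantities, relative to the nearest obstacle index j *)
Definition x_offset (j : nat) (x : pt) : pt := vsub x (vscale (delta x) (nvec j x)).
Definition Dw (eps : R) (j : nat) (x : pt) (p : pt) : Prop :=
  norm (vsub p (x_offset j x)) <= eps.
Definition LFw (eps : R) (j : nat) (x : pt) (q : pt) : Prop := LF x q /\ Dw eps j x q.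
Definition x_h (j : nat) (x : pt) : pt := vsub x (vscale (/2 * delta x) (nvec j x)).
Definition x_p (eps a : R) (j : nat) (x : pt) : pt :=
  vadd (vadd (x_offset j x) (vscale (eps / 2) (nvec j x)))
       (vscale (a * eps * sqrt 3 / 2) (Jrot (nvec j x))).
End Robot.

(* Main.v *)
Require Import Defs.
From Stdlib Require Import Reals Lra Lia Psatz List Classical ClassicalEpsilon.
Open Scope R_scope.

Lemma dot_ge0 p : 0 <= dot p p.
Proof. destruct p as [a b]; unfold dot; simpl; nra. Qed.
Lemma norm_ge0 p : 0 <= norm p.
Proof. unfold norm; apply sqrt_pos. Qed.
Lemma norm_sq p : norm p * norm p = dot p p.
Proof. unfold norm; apply sqrt_sqrt, dot_ge0. Qed.
Lemma norm_le_of_dot p e : 0 <= e -> dot p p <= e * e -> norm p <= e.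
Proof. intros. unfold norm. rewrite <- (sqrt_square e) by auto. apply sqrt_le_1_alt; auto. Qed.
Lemma dot_le_of_norm p e : norm p <= e -> dot p p <= e * e.
Proof. intros. rewrite <- norm_sq. pose proof (norm_ge0 p). nra. Qed.
Lemma dot_gt_of_norm p e : 0 <= e -> e < norm p -> e * e < dot p p.
Proof. intros. rewrite <- norm_sq. nra. Qed.
Lemma norm_lt_of_dot p e : 0 <= e -> dot p p < e * e -> norm p < e.
Proof. intros. destruct (Rlt_or_le (norm p) e); auto.
  pose proof (norm_sq p). nra. Qed.
Lemma dot_lt_of_norm p e : norm p < e -> dot p p < e * e.
Proof. intros. rewrite <- norm_sq. pose proof (norm_ge0 p). nra. Qed.

Lemma cs_dot a b : dot a b <= norm a * norm b.
Proof.
  pose proof (norm_sq a). pose proof (norm_sq b). pose proof (norm_ge0 a). pose proof (norm_ge0 b).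
  assert (L : dot a b * dot a b <= dot a a * dot b b).
  { destruct a as [a1 a2], b as [b1 b2]; unfold dot; simpl.
    assert (0 <= (a1*b2 - a2*b1)*(a1*b2 - a2*b1)) by apply Rle_0_sqr.
    assert (E : (a1*a1+a2*a2)*(b1*b1+b2*b2) - (a1*b1+a2*b2)*(a1*b1+a2*b2) = (a1*b2 - a2*b1)*(a1*b2 - a2*b1)) by ring.
    lra. }
  assert (0 <= norm a * norm b) by nra.
  destruct (Rle_or_lt (dot a b) (norm a * norm b)); auto. nra.
Qed.

Lemma norm_add_le a b : norm (vadd a b) <= norm a + norm b.
Proof.
  pose proof (norm_sq a). pose proof (norm_sq b). pose proof (norm_ge0 a). pose proof (norm_ge0 b).
  pose proof (cs_dot a b).
  apply norm_le_of_dot. lra.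
  replace (dot (vadd a b) (vadd a b)) with (dot a a + 2 * dot a b + dot b b).
  nra. destruct a, b; unfold dot, vadd; simpl; ring.
Qed.

Lemma norm_sub_le a b : norm (vsub a b) <= norm a + norm b.
Proof.
  replace (vsub a b) with (vadd a (vscale (-1) b)).
  2:{ destruct a, b; unfold vadd, vsub, vscale; simpl; f_equal; ring. }
  eapply Rle_trans. apply norm_add_le.
  assert (norm (vscale (-1) b) = norm b).
  { unfold norm. f_equal. destruct b; unfold dot, vscale; simpl; ring. }
  lra.
Qed.

Lemma Inf_spec (E : R -> Prop) : (exists y, E y) -> (forall y, E y -> 0 <= y) -> is_inf E (Inf E).
Proof.
  intros [y0 Hy0] Hlb.
  assert (Hex : exists l, is_inf E l).
  { destruct (completeness (fun z => E (- z))) as [l [Hub Hlub]].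
    - exists 0. intros z Hz. specialize (Hlb _ Hz). lra.
    - exists (- y0). rewrite Ropp_involutive. exact Hy0.
    - exists (- l). split.
      + intros y Hy. assert (- y <= l). { apply Hub. rewrite Ropp_involutive; auto. } lra.
      + intros b Hb. assert (l <= - b). { apply Hlub. intros z Hz. specialize (Hb _ Hz). lra. } lra. }
  unfold Inf. destruct (excluded_middle_informative _) as [h|h].
  - destruct (constructive_indefinite_description _ h) as [l Hl]. simpl. exact Hl.
  - contradiction.
Qed.

Lemma dist_pt_spec x A : nonempty A ->
  is_inf (fun t => exists a, A a /\ t = norm (vsub x a)) (dist_pt x A).
Proof. intros [a Ha]. apply Inf_spec. exists (norm (vsub x a)); eauto.
  intros y [b [_ ->]]. apply norm_ge0. Qed.

Lemma dist_pt_le x A a : A a -> dist_pt x A <= norm (vsub x a).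
Proof. intros Ha. destruct (dist_pt_spec x A) as [H _]. exists a; auto. apply H; eauto. Qed.

Lemma dist_pt_ge0 x A : nonempty A -> 0 <= dist_pt x A.
Proof. intros Hn. destruct (dist_pt_spec x A Hn) as [_ H]. apply H.
  intros y [b [_ ->]]. apply norm_ge0. Qed.

Lemma dist_pt_approx x A e : nonempty A -> 0 < e ->
  exists a, A a /\ norm (vsub x a) < dist_pt x A + e.
Proof. intros Hn He. apply NNPP. intro C.
  destruct (dist_pt_spec x A Hn) as [_ H].
  assert (dist_pt x A + e <= dist_pt x A). 2: lra.
  apply H. intros y [b [Hb ->]]. apply Rnot_lt_le. intro. apply C; eauto. Qed.

Lemma dist_set_le A B a b : A a -> B b -> dist_set A B <= norm (vsub a b).
Proof. intros Ha Hb. assert (is_inf (fun t => exists a b, A a /\ B b /\ t = norm (vsub a b)) (dist_set A B)).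
  { apply Inf_spec. exists (norm (vsub a b)); eauto 6. intros y [c [d [_ [_ ->]]]]. apply norm_ge0. }
  destruct H as [H _]. apply H. eauto 6. Qed.

Lemma fold_min_le l init y : In y l -> fold_right Rmin init l <= y.
Proof. induction l; simpl; intros H; [contradiction|]. destruct H as [<-|H].
  apply Rmin_l. eapply Rle_trans. apply Rmin_r. auto. Qed.

Lemma min_obs_le m O x i : (i < m)%nat -> min_obs_dist m O x <= dist_pt x (O i).
Proof. intros. unfold min_obs_dist. apply fold_min_le. apply in_map_iff. exists i. split; auto.
  apply in_seq. lia. Qed.
Lemma abs_lt_of_sq z e : 0 < e -> z * z < e * e -> Rabs z < e.
Proof. intros. unfold Rabs. destruct (Rcase_abs z); nra. Qed.

Lemma tail_small c : 0 < c -> exists N, forall n, (n >= N)%nat -> / (INR n + 1) < c.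
Proof. intros Hc. destruct (archimed_cor1 c Hc) as [N [HN HN0]]. exists N. intros n Hn.
  apply lt_INR in HN0. simpl in HN0. apply le_INR in Hn.
  eapply Rlt_trans. 2: exact HN. apply Rinv_lt_contravar; nra. Qed.

Lemma proj_exists x A : nonempty A -> is_closed A -> is_convex A ->
  exists p, A p /\ norm (vsub x p) = dist_pt x A.
Proof.
  intros Hne Hcl Hcv.
  set (d := dist_pt x A).
  assert (Hd0 : 0 <= d) by (apply dist_pt_ge0; auto).
  set (e := fun n : nat => / (INR n + 1)).
  assert (He0 : forall n, 0 < e n).
  { intro n. unfold e. apply Rinv_0_lt_compat. pose proof (pos_INR n). lra. }
  assert (Hs : forall n : nat, {a | A a /\ norm (vsub x a) < d + e n}).
  { intro n. apply constructive_indefinite_description. apply dist_pt_approx; auto. }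
  set (f := fun n => proj1_sig (Hs n)).
  assert (Hf : forall n, A (f n) /\ norm (vsub x (f n)) < d + e n).
  { intro n. unfold f. destruct (Hs n); simpl; auto. }
  assert (Hf2 : forall n, dot (vsub x (f n)) (vsub x (f n)) < (d + e n) * (d + e n)).
  { intro n. destruct (Hf n) as [_ H]. pose proof (norm_ge0 (vsub x (f n))).
    rewrite <- norm_sq. specialize (He0 n). nra. }
  assert (Hpar : forall n k, dot (vsub (f n) (f k)) (vsub (f n) (f k)) <=
            2 * ((d + e n) * (d + e n)) + 2 * ((d + e k) * (d + e k)) - 4 * (d * d)).
  { intros n k.
    set (mid := vadd (f n) (vscale (/2) (vsub (f k) (f n)))).
    assert (Hm : A mid). { apply Hcv; try apply Hf. lra. }
    assert (Hdm : d * d <= dot (vsub x mid) (vsub x mid)).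
    { pose proof (dist_pt_le x A mid Hm). fold d in H. rewrite <- norm_sq. nra. }
    assert (E : dot (vsub (f n) (f k)) (vsub (f n) (f k)) =
       2 * dot (vsub x (f n)) (vsub x (f n)) + 2 * dot (vsub x (f k)) (vsub x (f k))
       - 4 * dot (vsub x mid) (vsub x mid)).
    { unfold mid. destruct (f n), (f k), x. unfold dot, vsub, vadd, vscale; simpl. field. }
    rewrite E. pose proof (Hf2 n). pose proof (Hf2 k). lra. }
  assert (Hcauchy : forall eps, 0 < eps -> exists N, forall n k, (n >= N)%nat -> (k >= N)%nat ->
             dot (vsub (f n) (f k)) (vsub (f n) (f k)) < eps * eps).
  { intros eps Heps.
    set (c := Rmin 1 (eps * eps / (8 * d + 8))).
    assert (Hc : 0 < c). { unfold c. apply Rmin_glb_lt. lra. apply Rdiv_lt_0_compat; nra. }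
    destruct (tail_small c Hc) as [N HN]. exists N. intros n k Hn Hk.
    pose proof (HN n Hn) as H1. pose proof (HN k Hk) as H2. fold (e n) in H1. fold (e k) in H2.
    assert (c <= 1) by apply Rmin_l.
    assert (Hc2 : c * (8 * d + 8) <= eps * eps).
    { assert (c <= eps * eps / (8 * d + 8)) by apply Rmin_r.
      assert (eps * eps / (8 * d + 8) * (8 * d + 8) = eps * eps) by (field; lra). nra. }
    pose proof (Hpar n k). pose proof (He0 n). pose proof (He0 k).
    assert (e n * e n <= e n) by nra. assert (e k * e k <= e k) by nra.
    assert (4 * d * e n <= 4 * d * c) by nra. assert (4 * d * e k <= 4 * d * c) by nra.
    nra. }
  assert (Hc1 : Cauchy_crit (fun n => fst (f n))).
  { intros eps Heps. destruct (Hcauchy eps Heps) as [N HN]. exists N. intros n k Hn Hk.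
    specialize (HN n k Hn Hk). unfold Rdist. apply abs_lt_of_sq; auto.
    destruct (f n), (f k); unfold dot, vsub in HN; simpl in *.
    match type of HN with _ * _ + ?z * ?z < _ => pose proof (Rle_0_sqr z) end. unfold Rsqr in *. lra. }
  assert (Hc2 : Cauchy_crit (fun n => snd (f n))).
  { intros eps Heps. destruct (Hcauchy eps Heps) as [N HN]. exists N. intros n k Hn Hk.
    specialize (HN n k Hn Hk). unfold Rdist. apply abs_lt_of_sq; auto.
    destruct (f n), (f k); unfold dot, vsub in HN; simpl in *.
    match type of HN with ?z * ?z + _ < _ => pose proof (Rle_0_sqr z) end. unfold Rsqr in *. lra. }
  destruct (R_complete _ Hc1) as [l1 Hl1].
  destruct (R_complete _ Hc2) as [l2 Hl2].
  set (p := (l1, l2)).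
  assert (Hcv2 : forall g, 0 < g -> exists N, forall n, (n >= N)%nat -> norm (vsub (f n) p) < g).
  { intros g Hg. destruct (Hl1 (g/2)) as [N1 H1]. lra. destruct (Hl2 (g/2)) as [N2 H2]. lra.
    exists (max N1 N2). intros n Hn.
    assert (A1 : Rabs (fst (f n) - l1) < g/2). { apply H1. lia. }
    assert (A2 : Rabs (snd (f n) - l2) < g/2). { apply H2. lia. }
    apply norm_lt_of_dot. lra.
    unfold p. destruct (f n) as [a b]; unfold dot, vsub; simpl in *.
    revert A1 A2. unfold Rabs. destruct (Rcase_abs (a - l1)), (Rcase_abs (b - l2)); intros; nra. }
  exists p. split.
  - apply NNPP. intro Hp. destruct (Hcl p Hp) as [g [Hg Hball]].
    destruct (Hcv2 g Hg) as [N HN]. apply (Hball (f N)). apply HN. lia. apply Hf.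
  - apply Rle_antisym.
    + apply Rnot_lt_le. intro Hlt. set (g := norm (vsub x p) - d).
      assert (Hg : 0 < g) by (unfold g; fold d in Hlt; lra).
      destruct (Hcv2 (g/2)) as [N1 H1]. lra.
      destruct (tail_small (g/2)) as [N2 H2]. lra.
      set (n := max N1 N2).
      assert (B1 : norm (vsub (f n) p) < g/2). { apply H1. unfold n; lia. }
      assert (B2 : e n < g/2). { apply H2. unfold n; lia. }
      assert (B3 : norm (vsub x p) <= norm (vsub x (f n)) + norm (vsub (f n) p)).
      { replace (vsub x p) with (vadd (vsub x (f n)) (vsub (f n) p)). apply norm_add_le.
        destruct x, (f n), p; unfold vadd, vsub; simpl; f_equal; ring. }
      destruct (Hf n) as [_ B4]. unfold g in *. lra.
    + apply dist_pt_le. apply NNPP. intro Hp. destruct (Hcl p Hp) as [g [Hg Hball]].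
      destruct (Hcv2 g Hg) as [N HN]. apply (Hball (f N)). apply HN. lia. apply Hf.
Qed.

Lemma proj_spec x A : nonempty A -> is_closed A -> is_convex A ->
  A (proj A x) /\ norm (vsub x (proj A x)) = dist_pt x A.
Proof. intros. unfold proj. apply epsilon_spec. apply proj_exists; auto. Qed.

Lemma nvec_props (O : nat -> pt -> Prop) i x : nonempty (O i) -> is_closed (O i) -> is_convex (O i) ->
  0 < dist_pt x (O i) ->
  O i (proj (O i) x) /\ vsub x (proj (O i) x) = vscale (dist_pt x (O i)) (nvec O i x) /\
  dot (nvec O i x) (nvec O i x) = 1.
Proof.
  intros H1 H2 H3 HD. destruct (proj_spec x (O i) H1 H2 H3) as [Hp Hn].
  unfold nvec. set (p := proj (O i) x) in *. set (D := dist_pt x (O i)) in *.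
  rewrite Hn. pose proof (norm_sq (vsub x p)) as Hs. rewrite Hn in Hs.
  split; [auto|split].
  - destruct x, p; unfold vsub, vscale in *; simpl in *. f_equal; field; lra.
  - destruct x, p; unfold vsub, vscale, dot in *; simpl in *.
    replace (/ D * (r - r1) * (/ D * (r - r1)) + / D * (r0 - r2) * (/ D * (r0 - r2)))
      with (/ D * / D * ((r - r1) * (r - r1) + (r0 - r2) * (r0 - r2))) by ring.
    rewrite <- Hs. field. lra.
Qed.

Lemma Hhalf_iff (O : nat -> pt -> Prop) r i x q : dot (nvec O i x) (nvec O i x) = 1 ->
  (Hhalf O r i x q <-> dot (vsub q x) (nvec O i x) + / 2 * (dist_pt x (O i) - r) >= 0).
Proof.
  intros Hn. unfold Hhalf. set (c := / 2 * (dist_pt x (O i) - r)).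
  destruct (nvec O i x) as [n1 n2]. destruct q, x. unfold dot, vadd, vsub, vscale in *; simpl in *.
  replace ((r0 - r2 + c * n1) * n1 + (r1 - r3 + c * n2) * n2) with
    ((r0 - r2) * n1 + (r1 - r3) * n2 + c * (n1 * n1 + n2 * n2)) by ring.
  rewrite Hn. split; intro; lra.
Qed.

Lemma geo (u n N : pt) (dl eps r D : R) :
  dot n n = 1 -> dot N N = 1 -> 0 < r -> 0 < dl -> dl < eps -> 0 < D ->
  dot (vadd u (vscale dl n)) (vadd u (vscale dl n)) <= eps * eps ->
  dot u n + / 2 * dl >= 0 ->
  2 * r + 2 * eps < norm (vsub (vscale (r + dl) n) (vscale D N)) ->
  dot u N + / 2 * (D - r) >= 0.
Proof.
  intros Hn HN Hr Hdl Hde HD Hw Hj Hpq.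
  assert (Hu : dot u u <= eps * eps).
  { destruct u, n; unfold dot, vadd, vscale in *; simpl in *. nra. }
  destruct (Rle_or_lt (r + 2 * eps) D) as [HD2|HD2].
  - pose proof (cs_dot u (vscale (-1) N)) as Hcs.
    assert (norm (vscale (-1) N) = 1).
    { unfold norm. replace (dot (vscale (-1) N) (vscale (-1) N)) with (dot N N).
      rewrite HN. apply sqrt_1. destruct N; unfold dot, vscale; simpl; ring. }
    assert (norm u <= eps) by (apply norm_le_of_dot; lra).
    assert (dot u (vscale (-1) N) = - dot u N) by (destruct u, N; unfold dot, vscale; simpl; ring).
    nra.
  - assert (T1 : norm (vsub (vscale (r + dl) n) (vscale D N)) <=
                 norm (vadd (vadd u (vscale dl n)) (vscale r n)) + norm (vadd u (vscale D N))).
    { replace (vsub (vscale (r + dl) n) (vscale D N)) with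
        (vsub (vadd (vadd u (vscale dl n)) (vscale r n)) (vadd u (vscale D N))).
      apply norm_sub_le. destruct u, n, N; unfold vsub, vadd, vscale; simpl; f_equal; ring. }
    assert (T2 : norm (vadd (vadd u (vscale dl n)) (vscale r n)) <= norm (vadd u (vscale dl n)) + norm (vscale r n))
      by apply norm_add_le.
    assert (T3 : norm (vscale r n) = r).
    { unfold norm. replace (dot (vscale r n) (vscale r n)) with (r * r).
      apply sqrt_square; lra. destruct n; unfold dot, vscale in *; simpl in *. nra. }
    assert (T4 : norm (vadd u (vscale dl n)) <= eps) by (apply norm_le_of_dot; lra).
    assert (T5 : (r + eps) * (r + eps) < dot (vadd u (vscale D N)) (vadd u (vscale D N))).
    { apply dot_gt_of_norm; lra. }
    assert (E : dot (vadd u (vscale D N)) (vadd u (vscale D N)) = dot u u + 2 * D * dot u N + D * D * dot N N).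
    { destruct u, N; unfold dot, vadd, vscale; simpl; ring. }
    rewrite E, HN in T5.
    assert (D * (dot u N + / 2 * (D - r)) >= 0) by nra.
    destruct (Rge_or_gt (dot u N + / 2 * (D - r)) 0); auto. nra.
Qed.

Lemma norm_of_dot p k : 0 <= k -> dot p p = k * k -> norm p = k.
Proof. intros. unfold norm. rewrite H0. apply sqrt_square; auto. Qed.

Lemma vec3 x P Q : vsub P Q = vsub (vsub x Q) (vsub x P).
Proof. destruct x, P, Q; unfold vsub; simpl; f_equal; ring. Qed.

Theorem lemma1 (m : nat) (O : nat -> pt -> Prop) (r rho_max eps a : R) (x : pt) (j : nat) :
  (0 < m)%nat ->
  0 < r -> 0 < rho_max ->
  (forall i, (i < m)%nat -> nonempty (O i) /\ is_closed (O i) /\ is_convex (O i)) ->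
  (* eta > 2(r+rho_max) and 0 < eps < (eta - 2(r+rho_max))/2, eta = min_{i<>l} d(O_i,O_l) *)
  0 < eps ->
  (forall i l, (i < m)%nat -> (l < m)%nat -> i <> l ->
     eps < / 2 * (dist_set (O i) (O l) - 2 * (r + rho_max))) ->
  (a = -1 \/ a = 1) ->
  0 < delta m O r x -> delta m O r x < eps ->
  (* j is the index of the nearest obstacle *)
  (j < m)%nat -> dist_pt x (O j) = min_obs_dist m O x ->
  interior2 (LFw m O r eps j x) x /\
  (forall q, LFw m O r eps j x q <->
     (Dw m O r eps j x q /\ dot (vsub q (x_h m O r j x)) (nvec O j x) >= 0)) /\
  boundary2 (LFw m O r eps j x) (x_p m O r eps a j x).
Proof.
  intros Hm Hr Hrho Hobs Heps Heta Ha Hd0 Hd1 Hj Hjmin.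
  set (dl := delta m O r x) in *.
  assert (Hdj : dist_pt x (O j) = r + dl) by (unfold dl, delta; lra).
  assert (HDi : forall i, (i < m)%nat -> r + dl <= dist_pt x (O i)).
  { intros i Hi. pose proof (min_obs_le m O x i Hi). unfold dl, delta. lra. }
  assert (HNV : forall i, (i < m)%nat ->
     O i (proj (O i) x) /\ vsub x (proj (O i) x) = vscale (dist_pt x (O i)) (nvec O i x) /\
     dot (nvec O i x) (nvec O i x) = 1).
  { intros i Hi. destruct (Hobs i Hi) as [H1 [H2 H3]]. apply nvec_props; auto.
    specialize (HDi i Hi). lra. }
  destruct (HNV j Hj) as [HQ [HxQ Hnj]].
  set (n := nvec O j x) in *.
  set (Q := proj (O j) x) in *.
  rewrite Hdj in HxQ.
  set (xo := x_offset m O r j x).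
  assert (Exo : xo = vsub x (vscale dl n)) by reflexivity.
  assert (Exh : x_h m O r j x = vsub x (vscale (/ 2 * dl) n)) by reflexivity.
  assert (Hxh : forall q, dot (vsub q (x_h m O r j x)) n = dot (vsub q x) n + / 2 * dl).
  { intro q. rewrite Exh. destruct q, x, n; unfold dot, vsub, vscale in *; simpl in *.
    transitivity ((r0 - r2) * r4 + (r1 - r3) * r5 + / 2 * dl * (r4 * r4 + r5 * r5)). ring.
    rewrite Hnj. ring. }
  assert (HDw : forall q, Dw m O r eps j x q <-> norm (vadd (vsub q x) (vscale dl n)) <= eps).
  { intro q. unfold Dw. fold xo. rewrite Exo.
    replace (vsub q (vsub x (vscale dl n))) with (vadd (vsub q x) (vscale dl n)). tauto.
    destruct q, x, n; unfold vadd, vsub, vscale; simpl; f_equal; ring. }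
  assert (Hhj : forall q, Hhalf O r j x q <-> dot (vsub q x) n + / 2 * dl >= 0).
  { intro q. rewrite (Hhalf_iff O r j x q Hnj). fold n. rewrite Hdj.
    replace (r + dl - r) with dl by ring. tauto. }
  assert (Hchar : forall q, LFw m O r eps j x q <->
     (Dw m O r eps j x q /\ dot (vsub q (x_h m O r j x)) n >= 0)).
  { intro q. rewrite Hxh. split.
    - intros [HLF HD]. split; auto. apply Hhj. apply HLF. exact Hj.
    - intros [HD Hh]. split; auto. intros i Hi.
      destruct (Nat.eq_dec i j) as [->|Hij]. apply Hhj; auto.
      destruct (HNV i Hi) as [HP [HxP HNi]].
      apply Hhalf_iff; auto.
      pose proof (HDi i Hi) as HDi'.
      apply (geo (vsub q x) n (nvec O i x) dl eps r (dist_pt x (O i))); auto; try lra.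
      + apply dot_le_of_norm. apply HDw. auto.
      + replace (vsub (vscale (r + dl) n) (vscale (dist_pt x (O i)) (nvec O i x)))
          with (vsub (proj (O i) x) Q).
        2:{ rewrite <- HxQ, <- HxP. apply vec3. }
        pose proof (dist_set_le (O i) (O j) _ _ HP HQ).
        pose proof (Heta i j Hi Hj Hij). lra. }
  assert (Hnn : norm (vscale dl n) = dl).
  { apply norm_of_dot. lra. destruct n; unfold dot, vscale in *; simpl in *.
    transitivity (dl * dl * (r0 * r0 + r1 * r1)). ring. rewrite Hnj; ring. }
  split; [|split].
  -
    exists (Rmin (eps - dl) (dl / 2)). split.
    { apply Rmin_glb_lt; lra. }
    intros q Hq. pose proof (Rmin_l (eps - dl) (dl / 2)). pose proof (Rmin_r (eps - dl) (dl / 2)).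
    apply Hchar. split.
    + apply HDw. eapply Rle_trans. apply norm_add_le. lra.
    + rewrite Hxh. pose proof (cs_dot (vsub q x) (vscale (-1) n)) as Hcs.
      assert (norm (vscale (-1) n) = 1).
      { apply norm_of_dot. lra. destruct n; unfold dot, vscale in *; simpl in *.
        transitivity (r0 * r0 + r1 * r1). ring. rewrite Hnj; ring. }
      assert (dot (vsub q x) (vscale (-1) n) = - dot (vsub q x) n)
        by (destruct (vsub q x), n; unfold dot, vscale; simpl; ring).
      pose proof (norm_ge0 (vsub q x)). nra.
  - exact Hchar.
  - set (v := vadd (vscale (eps / 2) n) (vscale (a * eps * sqrt 3 / 2) (Jrot n))).
    assert (Exp : x_p m O r eps a j x = vadd xo v).
    { change (x_p m O r eps a j x) with
        (vadd (vadd xo (vscale (eps / 2) n)) (vscale (a * eps * sqrt 3 / 2) (Jrot n))).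
      unfold v. destruct xo, n; unfold vadd, vscale, Jrot; simpl; f_equal; ring. }
    assert (Ha2 : a * a = 1) by (destruct Ha; subst; ring).
    assert (Hs3 : sqrt 3 * sqrt 3 = 3) by (apply sqrt_sqrt; lra).
    assert (Hv : dot v v = eps * eps).
    { unfold v. destruct n as [n1 n2]; unfold dot, vadd, vscale, Jrot in *; simpl in *.
      transitivity ((eps/2)*(eps/2)*(n1*n1+n2*n2) + (a*a)*(sqrt 3*sqrt 3)*(eps*eps/4)*(n1*n1+n2*n2)).
      field. rewrite Hnj, Ha2, Hs3. field. }
    assert (Hvn : dot v n = eps / 2).
    { unfold v. destruct n as [n1 n2]; unfold dot, vadd, vscale, Jrot in *; simpl in *.
      transitivity (eps / 2 * (n1 * n1 + n2 * n2)). ring. rewrite Hnj; ring. }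
    assert (Hscale : forall c, 0 <= c -> norm (vscale c v) = c * eps).
    { intros c Hc. apply norm_of_dot. nra.
      transitivity (c * c * dot v v). destruct v; unfold dot, vscale; simpl; ring.
      rewrite Hv; ring. }
    assert (Hsub : forall c, vsub (vadd xo (vscale c v)) xo = vscale c v).
    { intro c. destruct xo, v; unfold vsub, vadd, vscale; simpl; f_equal; ring. }
    assert (Hin : forall c, 0 <= c -> Dw m O r eps j x (vadd xo (vscale c v)) <-> c * eps <= eps).
    { intros c Hc. unfold Dw. fold xo. rewrite Hsub, Hscale; auto. tauto. }
    assert (Ev1 : vadd xo v = vadd xo (vscale 1 v))
      by (destruct v; unfold vscale; simpl; rewrite !Rmult_1_l; reflexivity).
    rewrite Exp. split.
    + intros e He. exists (vadd xo v). split.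
      * replace (vsub (vadd xo v) (vadd xo v)) with (0, 0).
        apply norm_lt_of_dot. lra. unfold dot; simpl; nra.
        destruct xo, v; unfold vsub, vadd; simpl; f_equal; ring.
      * apply Hchar. split.
        -- rewrite Ev1. apply Hin; lra.
        -- rewrite Hxh. rewrite Exo.
           replace (dot (vsub (vadd (vsub x (vscale dl n)) v) x) n) with
             (dot v n - dl * dot n n).
           rewrite Hvn, Hnj. lra.
           destruct x, v, n; unfold dot, vsub, vadd, vscale; simpl; ring.
    + intros e He. set (s := e / (2 * eps)).
      assert (Hs : 0 < s) by (unfold s; apply Rdiv_lt_0_compat; lra).
      assert (Hse : s * eps = e / 2) by (unfold s; field; lra).
      exists (vadd xo (vscale (1 + s) v)). split.
      * replace (vsub (vadd xo (vscale (1 + s) v)) (vadd xo v)) with (vscale s v).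
        rewrite Hscale; lra.
        destruct xo, v; unfold vsub, vadd, vscale; simpl; f_equal; ring.
      * intros [_ HD]. apply Hin in HD; [|lra]. nra.
Qed.
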